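(* Let $R,S$ be rings and let $(\mathbf{L},\mathbf{F},\mathbf{R})$ be an adjoint triple with $\mathbf{F}:{}_R\mathcal{M}\to{}_S\mathcal{M}$ and $\mathbf{L},\mathbf{R}:{}_S\mathcal{M}\to{}_R\mathcal{M}$ (i.e. $\mathbf{L}\dashv\mathbf{F}\dashv\mathbf{R}$). The following statements are equivalent: (i) $(\mathbf{L},\mathbf{F},\mathbf{R})$ is a quasi-Frobenius triple, i.e. $\mathbf{F}$ is a quasi-Frobenius functor; (ii) there exists a functor $\mathbf{F}_1:{}_R\mathcal{M}\to{}_S\mathcal{M}$ such that $(\mathbf{F},\mathbf{R},\mathbf{F}_1)$ is a quasi-Frobenius triple for ${}_S\mathcal{M}$ and ${}_R\mathcal{M}$, i.e. $\mathbf{R}$ is a quasi-Frobenius functor; (iii) there exists a functor $\mathbf{F}_{-1}:{}_R\mathcal{M}\to{}_S\mathcal{M}$ such that $(\mathbf{F}_{-1},\mathbf{L},\mathbf{F})$ is a quasi-Frobenius triple for ${}_S\mathcal{M}$ and ${}_R\mathcal{M}$, i.e. $\mathbf{L}$ is a quasi-Frobenius functor.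
   Context: For functors $\mathbf{G},\mathbf{H}$ with the same source and target: $\mathbf{G}$ divides $\mathbf{H}$ if there are $n\ge1$ and natural transformations $\phi:\mathbf{G}\to\mathbf{H}^n$, $\psi:\mathbf{H}^n\to\mathbf{G}$ with $\psi\circ\phi=1$ ($\mathbf{H}^n(X)=\mathbf{H}(X)^n$); similar means mutually dividing. A quasi-Frobenius triple $(\mathbf{G},\mathbf{K},\mathbf{H})$ consists of functors with $\mathbf{G}$ left adjoint to $\mathbf{K}$, $\mathbf{H}$ right adjoint to $\mathbf{K}$, and $\mathbf{G}$ similar to $\mathbf{H}$; then $\mathbf{K}$ is called a quasi-Frobenius functor. *)

(* Defs.v *)
(* Module categories R-Mod are modelled by lmodType R
   (left R-modules), morphisms by {linear M -> N}. *)
From HB Require Import structures.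
From mathcomp Require Import all_boot all_algebra.
Set Implicit Arguments. Unset Strict Implicit. Unset Printing Implicit Defensive.
Import GRing.Theory.
Local Open Scope ring_scope.

(* A functor  R-Mod -> S-Mod  (not assumed additive). *)
Record Functor (R S : pzRingType) := {
  fobj :> lmodType R -> lmodType S;
  fmap : forall M N : lmodType R, {linear M -> N} -> {linear fobj M -> fobj N};
  fmap_id : forall (M : lmodType R) (x : fobj M),
      fmap (idfun : {linear M -> M}) x = x;
  fmap_comp : forall (M N P : lmodType R) (f : {linear M -> N}) (g : {linear N -> P})
      (x : fobj M), fmap (g \o f : {linear M -> P}) x = fmap g (fmap f x) }.

Arguments fmap {R S} f0 {M N} f.

Definition adjoint (R S : pzRingType) (G : Functor R S) (K : Functor S R) : Prop :=
  exists (eta : forall M : lmodType R, {linear M -> K (G M)})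
         (eps : forall N : lmodType S, {linear G (K N) -> N}),
    [/\ (forall (M M' : lmodType R) (f : {linear M -> M'}) (x : M),
           eta M' (f x) = fmap K (fmap G f) (eta M x)),
        (forall (N N' : lmodType S) (g : {linear N -> N'}) (y : G (K N)),
           eps N' (fmap G (fmap K g) y) = g (eps N y)),
        (forall (M : lmodType R) (x : G M), eps (G M) (fmap G (eta M) x) = x) &
        (forall (N : lmodType S) (y : K N), fmap K (eps N) (eta (K N) y) = y)].

(* G divides H: natural phi : G -> H^n, psi : H^n -> G with psi o phi = 1,
   where H^n(X) = {ffun 'I_n -> H X} and H^n(f) acts componentwise. *)
Definition divides (R S : pzRingType) (G H : Functor R S) : Prop :=
  exists (n : nat)
         (phi : forall M : lmodType R, {linear G M -> {ffun 'I_n -> H M}})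
         (psi : forall M : lmodType R, {linear {ffun 'I_n -> H M} -> G M}),
    [/\ (1 <= n)%N,
        (forall (M N : lmodType R) (f : {linear M -> N}) (x : G M),
           phi N (fmap G f x) = [ffun i => fmap H f (phi M x i)]),
        (forall (M N : lmodType R) (f : {linear M -> N}) (v : {ffun 'I_n -> H M}),
           psi N [ffun i => fmap H f (v i)] = fmap G f (psi M v)) &
        (forall (M : lmodType R) (x : G M), psi M (phi M x) = x)].

Definition similar (R S : pzRingType) (G H : Functor R S) : Prop :=
  divides G H /\ divides H G.

Definition qF_triple (R S : pzRingType) (G : Functor R S) (K : Functor S R)
  (H : Functor R S) : Prop :=
  [/\ adjoint G K, adjoint K H & similar G H].

Definition qF_functor (R S : pzRingType) (K : Functor S R) : Prop :=
  exists (G H : Functor R S), qF_triple G K H.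

(* Main.v *)
Require Import Defs.
From HB Require Import structures.
From mathcomp Require Import all_boot all_algebra.
From Stdlib Require Import FunctionalExtensionality ProofIrrelevance.
Set Implicit Arguments. Unset Strict Implicit. Unset Printing Implicit Defensive.
Import GRing.Theory.
Local Open Scope ring_scope.

Lemma linear_ext (A : pzRingType) (U V : lmodType A) (f g : {linear U -> V}) :
  f =1 g -> f = g.
Proof.
move=> fg.
case: f fg => f cf; case: g => g cg /= fg.
have E: f = g by apply: functional_extensionality.
subst g.
case: cf => [[a1] [s1]]; case: cg => [[a2] [s2]].
by rewrite (proof_irrelevance _ a1 a2) (proof_irrelevance _ s1 s2).
Qed.

Section FunHelp.
Variables (A B : pzRingType) (F : Functor A B).

Lemma fmap_ext (M N : lmodType A) (f g : {linear M -> N}) x :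
  f =1 g -> fmap F f x = fmap F g x.
Proof. by move=> /linear_ext ->. Qed.

Lemma fmap_idE (M : lmodType A) (h : {linear M -> M}) x :
  (forall y, h y = y) -> fmap F h x = x.
Proof.
move=> hy; rewrite -[RHS](@fmap_id _ _ F M x); apply: fmap_ext => y; exact: hy.
Qed.

Lemma fmap_compE (M N P : lmodType A) (f : {linear M -> N}) (g : {linear N -> P})
  (h : {linear M -> P}) x :
  (forall y, h y = g (f y)) -> fmap F h x = fmap F g (fmap F f x).
Proof.
move=> hy; rewrite -fmap_comp; apply: fmap_ext => y; exact: hy.
Qed.
End FunHelp.

Section FixMod.
Variables (A : pzRingType) (V : lmodType A) (e : {linear V -> V}).
Definition fixp : pred V := [pred x | e x == x].
Fact fixp_closed : subsemimod_closed fixp.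
Proof.
split; first split.
- by rewrite /fixp inE raddf0.
- move=> x y; rewrite !inE => /eqP hx /eqP hy; apply/eqP; rewrite raddfD.
  by congr (_ + _); [exact: hx | exact: hy].
- move=> a x; rewrite !inE => /eqP hx; apply/eqP; rewrite linearZ.
  congr (_ *: _); exact: hx.
Qed.
HB.instance Definition _ := GRing.isSubmodClosed.Build A V fixp fixp_closed.
Record fixT := MkFix { fval : V; fvalP : fval \in fixp }.
HB.instance Definition _ := [isSub for fval].
HB.instance Definition _ := [Choice of fixT by <:].
HB.instance Definition _ := [SubChoice_isSubLmodule of fixT by <:].

Lemma fvalE (x : fixT) : e (fval x) = fval x.
Proof. by apply/eqP; have := fvalP x; rewrite inE. Qed.

Definition fincl (x : fixT) : V := fval x.
Fact fincl_lin : linear fincl.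
Proof. move=> a x y; rewrite /fincl. have -> : fval (a *: x + y) = val (a *: x + y) by []. by rewrite raddfD. Qed.
HB.instance Definition _ := GRing.isLinear.Build A fixT V *:%R fincl fincl_lin.

Lemma fval_inj (x y : fixT) : fval x = fval y -> x = y.
Proof. exact: val_inj. Qed.

Section Corestr.
Variables (W : lmodType A) (h : {linear W -> V}) (hP : forall w, e (h w) = h w).
Lemma corestr_subproof w : h w \in fixp.
Proof. by rewrite inE; apply/eqP; exact: hP. Qed.
Definition corestr (w : W) : fixT := MkFix (corestr_subproof w).
Fact corestr_lin : linear corestr.
Proof.
move=> a u v; apply: val_inj; rewrite /= linearP.
by [].
Qed.
HB.instance Definition _ := GRing.isLinear.Build A W fixT *:%R corestr corestr_lin.
Lemma corestrE w : fval (corestr w) = h w.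
Proof. by []. Qed.
End Corestr.
End FixMod.

Section MkLin.
Variables (A : pzRingType) (U V : lmodType A) (f : U -> V) (hf : linear f).
Definition lfun := f.
HB.instance Definition _ := GRing.isLinear.Build A U V *:%R lfun hf.
Definition mklin : {linear U -> V} := lfun.
Lemma mklinE x : mklin x = f x. Proof. by []. Qed.
End MkLin.

Section Delta.
Variables (A : pzRingType) (V : lmodType A) (n : nat).
Definition delta (i : 'I_n) (x : V) : {ffun 'I_n -> V} :=
  [ffun j => if j == i then x else 0].
Fact delta_lin i : linear (delta i).
Proof.
move=> a x y; apply/ffunP => j; rewrite !ffunE.
by case: (j == i); rewrite ?scaler0 ?addr0.
Qed.
HB.instance Definition _ i := GRing.isLinear.Build A V {ffun 'I_n -> V} *:%R (delta i) (delta_lin i).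
Definition projf (i : 'I_n) (v : {ffun 'I_n -> V}) : V := v i.
Fact projf_lin i : linear (projf i).
Proof. by move=> a x y; rewrite /projf !ffunE. Qed.
HB.instance Definition _ i := GRing.isLinear.Build A {ffun 'I_n -> V} V *:%R (projf i) (projf_lin i).

Lemma sum_delta (v : {ffun 'I_n -> V}) : \sum_i delta i (v i) = v.
Proof.
apply/ffunP => j; rewrite sum_ffunE (bigD1 j) //= !ffunE eqxx big1 ?addr0 //.
by move=> i /negbTE; rewrite ffunE eq_sym => ->.
Qed.
End Delta.

Section Fpow.
Variables (A B : pzRingType) (n : nat) (H : Functor A B).
Definition powmap (M N : lmodType A) (f : {linear M -> N}) (v : {ffun 'I_n -> H M}) :
  {ffun 'I_n -> H N} := [ffun i => fmap H f (v i)].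
Fact powmap_lin M N f : linear (@powmap M N f).
Proof. by move=> a x y; apply/ffunP => j; rewrite !ffunE linearP. Qed.
HB.instance Definition _ M N f := GRing.isLinear.Build B {ffun 'I_n -> H M}
   {ffun 'I_n -> H N} *:%R (@powmap M N f) (powmap_lin f).

Definition Fpow : Functor A B.
Proof.
refine (@Build_Functor A B (fun M => ({ffun 'I_n -> H M} : lmodType B))
  (fun M N f => (@powmap M N f : {linear _ -> _})) _ _).
- by move=> M x; apply/ffunP => i; rewrite ffunE fmap_id.
- by move=> M N P f g x; apply/ffunP => i; rewrite !ffunE fmap_comp.
Defined.
End Fpow.

Definition retract (A B : pzRingType) (G H : Functor A B) : Prop :=
  exists (phi : forall M : lmodType A, {linear G M -> H M})
         (psi : forall M : lmodType A, {linear H M -> G M}),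
    [/\ (forall (M N : lmodType A) (f : {linear M -> N}) (x : G M),
           phi N (fmap G f x) = fmap H f (phi M x)),
        (forall (M N : lmodType A) (f : {linear M -> N}) (v : H M),
           psi N (fmap H f v) = fmap G f (psi M v)) &
        (forall (M : lmodType A) (x : G M), psi M (phi M x) = x)].

Lemma dividesE (A B : pzRingType) (G H : Functor A B) :
  divides G H <-> exists n, (1 <= n)%N /\ retract G (Fpow n H).
Proof.
split.
- by case=> n [phi [psi [n1 h1 h2 h3]]]; exists n; split=> //; exists phi, psi.
- by case=> n [n1 [phi [psi [h1 h2 h3]]]]; exists n, phi, psi.
Qed.

Section PowAdj.
Variables (A B : pzRingType) (n : nat) (G : Functor A B) (K : Functor B A).
Variables (eta : forall M : lmodType A, {linear M -> K (G M)})
          (eps : forall N : lmodType B, {linear G (K N) -> N}).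
Definition etan (M : lmodType A) (x : M) : Fpow n K (Fpow n G M) :=
  [ffun i => fmap K (delta i : {linear G M -> {ffun 'I_n -> G M}}) (eta M x)].
Fact etan_lin M : linear (@etan M).
Proof. by move=> a x y; apply/ffunP => i; rewrite !ffunE !linearP. Qed.


Definition epsn (N : lmodType B) (w : Fpow n G (Fpow n K N)) : N :=
  \sum_i eps N (fmap G (projf i : {linear {ffun 'I_n -> K N} -> K N}) (w i)).
Fact epsn_lin N : linear (@epsn N).
Proof.
move=> a x y; rewrite /epsn scaler_sumr -big_split; apply: eq_bigr => i _.
by rewrite !ffunE !linearP.
Qed.


Hypotheses (etaN : forall (M M' : lmodType A) (f : {linear M -> M'}) (x : M),
           eta M' (f x) = fmap K (fmap G f) (eta M x))
        (epsN : forall (N N' : lmodType B) (g : {linear N -> N'}) (y : G (K N)),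
           eps N' (fmap G (fmap K g) y) = g (eps N y))
        (tri1 : forall (M : lmodType A) (x : G M), eps (G M) (fmap G (eta M) x) = x)
        (tri2 : forall (N : lmodType B) (y : K N), fmap K (eps N) (eta (K N) y) = y).

Lemma pow_adjoint : adjoint (Fpow n G) (Fpow n K).
Proof.
exists (fun M => mklin (@etan_lin M)), (fun N => mklin (@epsn_lin N)).
split.
- move=> M M' f x; apply/ffunP => i; rewrite /= !ffunE etaN.
  rewrite -!fmap_comp; apply: fmap_ext => z /=.
  apply/ffunP => j; rewrite !ffunE.
  by case: (j == i); rewrite ?raddf0.
- move=> N N' g y; rewrite /= /epsn linear_sum; apply: eq_bigr => i _.
  rewrite ffunE -epsN -!fmap_comp; congr (eps _ _); apply: fmap_ext => z /=.
  by rewrite /projf ffunE.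
- move=> M x /=; rewrite /epsn -[RHS]sum_delta; apply: eq_bigr => i _.
  rewrite ffunE -fmap_comp.
  rewrite (@fmap_compE _ _ G _ _ _ (eta M) (fmap K (delta i : {linear G M -> {ffun 'I_n -> G M}}))); last first.
    by move=> z; rewrite /= /projf ffunE.
  by rewrite epsN tri1.
- move=> N y; apply/ffunP => j; rewrite /= !ffunE -fmap_comp.
  rewrite (@fmap_compE _ _ K _ _ _ (fmap G (projf j : {linear {ffun 'I_n -> K N} -> K N})) (eps N)); last first.
    move=> z /=; rewrite /lfun /epsn (bigD1 j) //= big1 ?addr0.
      by rewrite /projf ffunE eqxx.
    by move=> i /negbTE; rewrite /projf ffunE eq_sym => ->; rewrite !raddf0.
  by rewrite -etaN tri2.
Qed.
End PowAdj.

Section Mate.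
Variables (A B : pzRingType) (G G' : Functor A B) (K K' : Functor B A).
Variables (eta : forall M : lmodType A, {linear M -> K (G M)})
          (eps : forall N : lmodType B, {linear G (K N) -> N}).
Hypotheses (etaN : forall (M M' : lmodType A) (f : {linear M -> M'}) (x : M),
           eta M' (f x) = fmap K (fmap G f) (eta M x))
        (epsN : forall (N N' : lmodType B) (g : {linear N -> N'}) (y : G (K N)),
           eps N' (fmap G (fmap K g) y) = g (eps N y))
        (tri1 : forall (M : lmodType A) (x : G M), eps (G M) (fmap G (eta M) x) = x)
        (tri2 : forall (N : lmodType B) (y : K N), fmap K (eps N) (eta (K N) y) = y).
Variables (eta' : forall M : lmodType A, {linear M -> K' (G' M)})
          (eps' : forall N : lmodType B, {linear G' (K' N) -> N}).
Hypotheses (etaN' : forall (M M' : lmodType A) (f : {linear M -> M'}) (x : M),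
           eta' M' (f x) = fmap K' (fmap G' f) (eta' M x))
        (epsN' : forall (N N' : lmodType B) (g : {linear N -> N'}) (y : G' (K' N)),
           eps' N' (fmap G' (fmap K' g) y) = g (eps' N y))
        (tri1' : forall (M : lmodType A) (x : G' M), eps' (G' M) (fmap G' (eta' M) x) = x)
        (tri2' : forall (N : lmodType B) (y : K' N), fmap K' (eps' N) (eta' (K' N) y) = y).

Lemma L1 (M : lmodType A) (N : lmodType B) (f : {linear M -> K' N}) y :
  fmap K' (eps' N \o fmap G' f : {linear _ -> _}) (eta' M y) = f y.
Proof. by rewrite fmap_comp -etaN' tri2'. Qed.

Lemma L2 (M : lmodType A) (N : lmodType B) (f : {linear G' M -> N}) w :
  eps' N (fmap G' (fmap K' f \o eta' M : {linear _ -> _}) w) = f w.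
Proof. by rewrite fmap_comp epsN' tri1'. Qed.

Section Right.
Variables (phi : forall M : lmodType A, {linear G M -> G' M})
          (psi : forall M : lmodType A, {linear G' M -> G M}).
Hypotheses (phiN : forall (M N : lmodType A) (f : {linear M -> N}) (x : G M),
           phi N (fmap G f x) = fmap G' f (phi M x))
        (psiN : forall (M N : lmodType A) (f : {linear M -> N}) (v : G' M),
           psi N (fmap G' f v) = fmap G f (psi M v))
        (psiphi : forall (M : lmodType A) (x : G M), psi M (phi M x) = x).

Definition ma (N : lmodType B) : {linear K' N -> K N} :=
  fmap K (eps' N \o phi (K' N) : {linear _ -> _}) \o eta (K' N).
Definition mb (N : lmodType B) : {linear K N -> K' N} :=
  fmap K' (eps N \o psi (K N) : {linear _ -> _}) \o eta' (K N).

Lemma right_mate : retract K K'.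
Proof.
exists mb, ma; split.
- move=> N N' g y; rewrite /mb /= etaN' -!fmap_comp; apply: fmap_ext => z /=.
  by rewrite psiN epsN.
- move=> N N' g y; rewrite /ma /= etaN -!fmap_comp; apply: fmap_ext => z /=.
  by rewrite phiN epsN'.
- move=> N y.
  transitivity (fmap K (eps' N \o phi (K' N) : {linear _ -> _}) (eta (K' N) (mb N y))); first by [].
  rewrite etaN -fmap_comp.
  rewrite -[RHS](tri2 y); apply: fmap_ext => z /=.
  by rewrite phiN /mb L2 /= psiphi.
Qed.
End Right.

Section Left.
Variables (phi : forall N : lmodType B, {linear K N -> K' N})
          (psi : forall N : lmodType B, {linear K' N -> K N}).
Hypotheses (phiN : forall (M N : lmodType B) (f : {linear M -> N}) (x : K M),
           phi N (fmap K f x) = fmap K' f (phi M x))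
        (psiN : forall (M N : lmodType B) (f : {linear M -> N}) (v : K' M),
           psi N (fmap K' f v) = fmap K f (psi M v))
        (psiphi : forall (M : lmodType B) (x : K M), psi M (phi M x) = x).

Definition mc (M : lmodType A) : {linear G M -> G' M} :=
  eps (G' M) \o fmap G (psi (G' M) \o eta' M : {linear _ -> _}).
Definition md (M : lmodType A) : {linear G' M -> G M} :=
  eps' (G M) \o fmap G' (phi (G M) \o eta M : {linear _ -> _}).

Lemma left_mate : retract G G'.
Proof.
exists mc, md; split.
- move=> M M' f x; rewrite /mc /= -epsN -!fmap_comp; congr (eps _ _).
  apply: fmap_ext => z /=; by rewrite etaN' psiN.
- move=> M M' f x; rewrite /md /= -epsN' -!fmap_comp; congr (eps' _ _).
  apply: fmap_ext => z /=; by rewrite etaN phiN.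
- move=> M x.
  transitivity (md M (eps (G' M) (fmap G (psi (G' M) \o eta' M : {linear _ -> _}) x))); first by [].
  rewrite -epsN -fmap_comp.
  rewrite -[RHS](tri1 x); congr (eps _ _); apply: (@fmap_ext _ _ G _ _ (fmap K (md M) \o (psi (G' M) \o eta' M) : {linear _ -> _}) (eta M) x) => z /=.
  by rewrite -psiN L1 /= psiphi.
Qed.
End Left.
End Mate.

Section AdjLem.
Variables (A B : pzRingType) (G : Functor A B) (K : Functor B A).
Variables (eta : forall M : lmodType A, {linear M -> K (G M)})
          (eps : forall N : lmodType B, {linear G (K N) -> N}).
Hypotheses (etaN : forall (M M' : lmodType A) (f : {linear M -> M'}) (x : M),
           eta M' (f x) = fmap K (fmap G f) (eta M x))
        (epsN : forall (N N' : lmodType B) (g : {linear N -> N'}) (y : G (K N)),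
           eps N' (fmap G (fmap K g) y) = g (eps N y))
        (tri1 : forall (M : lmodType A) (x : G M), eps (G M) (fmap G (eta M) x) = x)
        (tri2 : forall (N : lmodType B) (y : K N), fmap K (eps N) (eta (K N) y) = y).

Lemma adjL1 (M : lmodType A) (N : lmodType B) (f : {linear M -> K N}) y :
  fmap K (eps N \o fmap G f : {linear _ -> _}) (eta M y) = f y.
Proof. by rewrite fmap_comp -etaN tri2. Qed.

Lemma adjL2 (M : lmodType A) (N : lmodType B) (f : {linear G M -> N}) w :
  eps N (fmap G (fmap K f \o eta M : {linear _ -> _}) w) = f w.
Proof. by rewrite fmap_comp epsN tri1. Qed.
End AdjLem.

Section RCons.
Variables (A B : pzRingType) (G G2 : Functor A B) (K2 : Functor B A).
Variables (eta : forall M : lmodType A, {linear M -> K2 (G2 M)})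
          (eps : forall N : lmodType B, {linear G2 (K2 N) -> N}).
Hypotheses (etaN : forall (M M' : lmodType A) (f : {linear M -> M'}) (x : M),
           eta M' (f x) = fmap K2 (fmap G2 f) (eta M x))
        (epsN : forall (N N' : lmodType B) (g : {linear N -> N'}) (y : G2 (K2 N)),
           eps N' (fmap G2 (fmap K2 g) y) = g (eps N y))
        (tri1 : forall (M : lmodType A) (x : G2 M), eps (G2 M) (fmap G2 (eta M) x) = x)
        (tri2 : forall (N : lmodType B) (y : K2 N), fmap K2 (eps N) (eta (K2 N) y) = y).
Variables (phi : forall M : lmodType A, {linear G M -> G2 M})
          (psi : forall M : lmodType A, {linear G2 M -> G M}).
Hypotheses (phiN : forall (M N : lmodType A) (f : {linear M -> N}) (x : G M),
           phi N (fmap G f x) = fmap G2 f (phi M x))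
        (psiN : forall (M N : lmodType A) (f : {linear M -> N}) (v : G2 M),
           psi N (fmap G2 f v) = fmap G f (psi M v))
        (psiphi : forall (M : lmodType A) (x : G M), psi M (phi M x) = x).

Definition rth (M : lmodType A) : {linear G2 M -> G2 M} := phi M \o psi M.
Lemma rthN (M N : lmodType A) (f : {linear M -> N}) v :
  rth N (fmap G2 f v) = fmap G2 f (rth M v).
Proof. by rewrite /= psiN phiN. Qed.

Definition rths (N : lmodType B) : {linear K2 N -> K2 N} :=
  fmap K2 (eps N \o rth (K2 N) : {linear _ -> _}) \o eta (K2 N).

Lemma rthsN (N N' : lmodType B) (g : {linear N -> N'}) y :
  rths N' (fmap K2 g y) = fmap K2 g (rths N y).
Proof.
rewrite /rths /= etaN -!fmap_comp; apply: fmap_ext => z /=.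
by rewrite psiN phiN epsN.
Qed.

Lemma rths_sharp (M : lmodType A) (N : lmodType B) (f : {linear G2 M -> N}) x :
  rths N (fmap K2 f (eta M x)) = fmap K2 (f \o rth M : {linear _ -> _}) (eta M x).
Proof.
rewrite /rths /= etaN -fmap_comp etaN -fmap_comp; apply: fmap_ext => z /=.
rewrite -fmap_comp psiN phiN.
exact: (adjL2 epsN tri1).
Qed.

Definition Kobj (N : lmodType B) : lmodType A := fixT (rths N).

Lemma Kmap_subproof (N N' : lmodType B) (g : {linear N -> N'}) (w : Kobj N) :
  rths N' ((fmap K2 g \o @fincl _ _ (rths N) : {linear _ -> _}) w) =
  (fmap K2 g \o @fincl _ _ (rths N) : {linear _ -> _}) w.
Proof.
change (rths N' (fmap K2 g (fincl w)) = fmap K2 g (fincl w)).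
by rewrite rthsN; congr (fmap K2 g _); exact: fvalE.
Qed.

Definition Kmap (N N' : lmodType B) (g : {linear N -> N'}) : {linear Kobj N -> Kobj N'} :=
  mklin (corestr_lin (Kmap_subproof g)).

Lemma KmapE (N N' : lmodType B) (g : {linear N -> N'}) w :
  fval (Kmap g w) = fmap K2 g (fval w).
Proof. by []. Qed.

Definition Kfun : Functor B A.
Proof.
refine (@Build_Functor B A Kobj Kmap _ _).
- by move=> N x; apply: fval_inj; rewrite KmapE fmap_id.
- by move=> N N' P f g x; apply: fval_inj; rewrite !KmapE fmap_comp.
Defined.

Lemma reta_subproof (M : lmodType A) (x : M) :
  rths (G M) ((fmap K2 (psi M) \o eta M : {linear _ -> _}) x) =
  (fmap K2 (psi M) \o eta M : {linear _ -> _}) x.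
Proof.
change (rths (G M) (fmap K2 (psi M) (eta M x)) = fmap K2 (psi M) (eta M x)).
by rewrite rths_sharp; apply: fmap_ext => z /=; rewrite psiphi.
Qed.

Definition reta (M : lmodType A) : {linear M -> Kfun (G M)} :=
  mklin (corestr_lin (@reta_subproof M)).

Lemma retaE (M : lmodType A) x : fval (reta M x) = fmap K2 (psi M) (eta M x).
Proof. by []. Qed.

Definition reps (N : lmodType B) : {linear G (Kfun N) -> N} :=
  eps N \o fmap G2 (@fincl _ _ (rths N) : {linear _ -> _}) \o phi (Kobj N).

Lemma right_cons : adjoint G Kfun.
Proof.
exists reta, reps; split.
- move=> M M' f x; apply: fval_inj.
  rewrite [fmap _ _ _]/= KmapE !retaE etaN -!fmap_comp; apply: fmap_ext => z /=.
  by rewrite psiN.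
- move=> N N' g y; rewrite /= phiN -fmap_comp.
  by rewrite (@fmap_compE _ _ G2 _ _ _ (@fincl _ _ (rths N)) (fmap K2 g)) // epsN.
- move=> M x; rewrite /= phiN -fmap_comp.
  rewrite -[RHS](psiphi x); rewrite -[in RHS](adjL2 epsN tri1 (psi M)).
  by congr (eps _ _); apply: fmap_ext.
- move=> N y; apply: fval_inj; rewrite [fmap _ _ _]/= KmapE retaE -fmap_comp.
  rewrite -[RHS]fvalE /rths [in RHS]/=.
  have E : eta (K2 N) (fval y) = fmap K2 (fmap G2 (@fincl _ _ (rths N))) (eta (Kobj N) y).
    exact: (etaN (@fincl _ _ (rths N)) y).
  rewrite E -fmap_comp; apply: fmap_ext => z /=.
  by rewrite psiN phiN.
Qed.
End RCons.

Section LCons.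
Variables (A B : pzRingType) (K K2 : Functor B A) (G2 : Functor A B).
Variables (eta : forall M : lmodType A, {linear M -> K2 (G2 M)})
          (eps : forall N : lmodType B, {linear G2 (K2 N) -> N}).
Hypotheses (etaN : forall (M M' : lmodType A) (f : {linear M -> M'}) (x : M),
           eta M' (f x) = fmap K2 (fmap G2 f) (eta M x))
        (epsN : forall (N N' : lmodType B) (g : {linear N -> N'}) (y : G2 (K2 N)),
           eps N' (fmap G2 (fmap K2 g) y) = g (eps N y))
        (tri1 : forall (M : lmodType A) (x : G2 M), eps (G2 M) (fmap G2 (eta M) x) = x)
        (tri2 : forall (N : lmodType B) (y : K2 N), fmap K2 (eps N) (eta (K2 N) y) = y).
Variables (phi : forall N : lmodType B, {linear K N -> K2 N})
          (psi : forall N : lmodType B, {linear K2 N -> K N}).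
Hypotheses (phiN : forall (M N : lmodType B) (f : {linear M -> N}) (x : K M),
           phi N (fmap K f x) = fmap K2 f (phi M x))
        (psiN : forall (M N : lmodType B) (f : {linear M -> N}) (v : K2 M),
           psi N (fmap K2 f v) = fmap K f (psi M v))
        (psiphi : forall (M : lmodType B) (x : K M), psi M (phi M x) = x).

Definition lth (N : lmodType B) : {linear K2 N -> K2 N} := phi N \o psi N.
Lemma lthN (M N : lmodType B) (f : {linear M -> N}) v :
  lth N (fmap K2 f v) = fmap K2 f (lth M v).
Proof. by rewrite /= psiN phiN. Qed.

Definition lths (M : lmodType A) : {linear G2 M -> G2 M} :=
  eps (G2 M) \o fmap G2 (lth (G2 M) \o eta M : {linear _ -> _}).

Lemma lthsN (M M' : lmodType A) (f : {linear M -> M'}) x :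
  lths M' (fmap G2 f x) = fmap G2 f (lths M x).
Proof.
rewrite /lths /= -epsN -!fmap_comp; congr (eps _ _); apply: fmap_ext => z /=.
by rewrite etaN psiN phiN.
Qed.

Lemma lths_idem (M : lmodType A) x : lths M (lths M x) = lths M x.
Proof.
transitivity (lths M (eps (G2 M) (fmap G2 (lth (G2 M) \o eta M : {linear _ -> _}) x))); first by [].
rewrite -epsN -fmap_comp; congr (eps _ _); apply: fmap_ext => z /=.
rewrite -(lthN (lths M) (eta M z)).
have -> : fmap K2 (lths M) (eta M z) = lth (G2 M) (eta M z).
  exact: (adjL1 etaN tri2).
by rewrite /= psiphi.
Qed.

Definition Gobj (M : lmodType A) : lmodType B := fixT (lths M).

Definition lp (M : lmodType A) : {linear G2 M -> Gobj M} :=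
  mklin (corestr_lin (@lths_idem M)).
Lemma lpE (M : lmodType A) x : fval (lp M x) = lths M x. Proof. by []. Qed.

Lemma Gmap_subproof (M M' : lmodType A) (f : {linear M -> M'}) (w : Gobj M) :
  lths M' ((fmap G2 f \o @fincl _ _ (lths M) : {linear _ -> _}) w) =
  (fmap G2 f \o @fincl _ _ (lths M) : {linear _ -> _}) w.
Proof.
change (lths M' (fmap G2 f (fincl w)) = fmap G2 f (fincl w)).
by rewrite lthsN; congr (fmap G2 f _); exact: fvalE.
Qed.

Definition Gmap (M M' : lmodType A) (f : {linear M -> M'}) : {linear Gobj M -> Gobj M'} :=
  mklin (corestr_lin (Gmap_subproof f)).
Lemma GmapE (M M' : lmodType A) (f : {linear M -> M'}) w : fval (Gmap f w) = fmap G2 f (fval w).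
Proof. by []. Qed.

Definition Gfun : Functor A B.
Proof.
refine (@Build_Functor A B Gobj Gmap _ _).
- by move=> N x; apply: fval_inj; rewrite GmapE fmap_id.
- by move=> N N' P f g x; apply: fval_inj; rewrite !GmapE fmap_comp.
Defined.

Definition leta (M : lmodType A) : {linear M -> K (Gfun M)} :=
  psi (Gobj M) \o fmap K2 (lp M) \o eta M.
Definition leps (N : lmodType B) : {linear Gfun (K N) -> N} :=
  eps N \o fmap G2 (phi N) \o @fincl _ _ (lths (K N)).

Lemma left_cons : adjoint Gfun K.
Proof.
exists leta, leps; split.
- move=> M M' f x; rewrite /= etaN -fmap_comp -psiN -fmap_comp; congr (psi _ _).
  apply: fmap_ext => z /=; apply: fval_inj; by rewrite GmapE !lpE lthsN.
- move=> N N' g y; rewrite /= -!fmap_comp -epsN -fmap_comp; congr (eps _ _).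
  by apply: fmap_ext => z /=; rewrite phiN.
- move=> M x; apply: fval_inj.
  change (fval (eps (Gobj M) (fmap G2 (phi (Gobj M)) (fmap G2 (leta M) (fval x)))) = fval x).
  rewrite -fmap_comp (@fmap_compE _ _ G2 _ _ _ (lth (G2 M) \o eta M : {linear _ -> _}) (fmap K2 (lp M))); last first.
    by move=> y /=; rewrite psiN phiN.
  rewrite epsN lpE.
  change (lths M (lths M (fval x)) = fval x).
  by rewrite !fvalE.
- move=> N y.
  change (fmap K (leps N) (psi (Gobj (K N)) (fmap K2 (lp (K N)) (eta (K N) y))) = y).
  rewrite -psiN -fmap_comp.
  set h := (eps N \o fmap G2 (phi N) : {linear G2 (K N) -> N}).
  rewrite (@fmap_ext _ _ K2 _ _ _ (eps N \o fmap G2 (fmap K2 h \o (lth (G2 (K N)) \o eta (K N)) : {linear _ -> _}) : {linear _ -> _})); last first.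
    move=> z /=. by rewrite [in RHS](@fmap_compE _ _ G2 _ _ _ (lth (G2 (K N)) \o eta (K N) : {linear _ -> _}) (fmap K2 h)) // epsN.
  rewrite (adjL1 etaN tri2).
  change (psi N (fmap K2 h (lth (G2 (K N)) (eta (K N) y))) = y).
  rewrite -lthN /h (adjL1 etaN tri2 (phi N)).
  by rewrite /= !psiphi.
Qed.
End LCons.

Section Final.
Variables (A B : pzRingType).

Lemma adj_divR (G H : Functor A B) (K J : Functor B A) :
  adjoint G K -> adjoint H J -> divides G H -> divides K J.
Proof.
move=> [e1 [p1 [n1 n2 t1 t2]]] [e2 [p2 [m1 m2 s1 s2]]] /dividesE [n [hn [phi [psi [h1 h2 h3]]]]].
have [e3 [p3 [o1 o2 u1 u2]]] := pow_adjoint n m1 m2 s1 s2.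
apply/dividesE; exists n; split=> //.
exact: (right_mate n1 n2 t2 o1 o2 u1 h1 h2 h3).
Qed.

Lemma adj_divL (G H : Functor A B) (K J : Functor B A) :
  adjoint G K -> adjoint H J -> divides K J -> divides G H.
Proof.
move=> [e1 [p1 [n1 n2 t1 t2]]] [e2 [p2 [m1 m2 s1 s2]]] /dividesE [n [hn [phi [psi [h1 h2 h3]]]]].
have [e3 [p3 [o1 o2 u1 u2]]] := pow_adjoint n m1 m2 s1 s2.
apply/dividesE; exists n; split=> //.
exact: (left_mate n1 n2 t1 o1 o2 u2 h1 h2 h3).
Qed.

Lemma adj_simR (G H : Functor A B) (K J : Functor B A) :
  adjoint G K -> adjoint H J -> Defs.similar G H -> Defs.similar K J.
Proof. by move=> a1 a2 [d1 d2]; split; [exact: (adj_divR a1 a2) | exact: (adj_divR a2 a1)]. Qed.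

Lemma adj_simL (G H : Functor A B) (K J : Functor B A) :
  adjoint G K -> adjoint H J -> Defs.similar K J -> Defs.similar G H.
Proof. by move=> a1 a2 [d1 d2]; split; [exact: (adj_divL a1 a2) | exact: (adj_divL a2 a1)]. Qed.

Lemma adj_exR (G H : Functor A B) (J : Functor B A) :
  divides G H -> adjoint H J -> exists K : Functor B A, adjoint G K.
Proof.
move=> /dividesE [n [hn [phi [psi [h1 h2 h3]]]]] [e2 [p2 [m1 m2 s1 s2]]].
have [e3 [p3 [o1 o2 u1 u2]]] := pow_adjoint n m1 m2 s1 s2.
eexists; exact: (right_cons o1 o2 u1 h1 h2 h3).
Qed.

Lemma adj_exL (K J : Functor B A) (H : Functor A B) :
  divides K J -> adjoint H J -> exists G : Functor A B, adjoint G K.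
Proof.
move=> /dividesE [n [hn [phi [psi [h1 h2 h3]]]]] [e2 [p2 [m1 m2 s1 s2]]].
have [e3 [p3 [o1 o2 u1 u2]]] := pow_adjoint n m1 m2 s1 s2.
eexists; exact: (left_cons o1 o2 u2 h1 h2 h3).
Qed.
End Final.

Local Close Scope ring_scope.

Theorem theorem3p8 (R S : pzRingType)
  (L : Functor S R) (F : Functor R S) (Rt : Functor S R) :
  adjoint L F -> adjoint F Rt ->
  (qF_triple L F Rt <-> exists F1 : Functor R S, qF_triple F Rt F1) /\
  (qF_triple L F Rt <-> exists Fm1 : Functor R S, qF_triple Fm1 L F).
Proof.
move=> hLF hFR; split; split.
- case=> _ _ [d1 d2].
  have [F1 hRF1] := adj_exR d2 hLF.
  exists F1; split=> //; exact: (adj_simR hLF hRF1).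
- case=> F1 [_ hRF1 sFF1]; split=> //; exact: (adj_simL hLF hRF1 sFF1).
- case=> _ _ [d1 d2].
  have [Fm1 hFm1] := adj_exL d1 hFR.
  exists Fm1; split=> //; exact: (adj_simL hFm1 hFR).
- case=> Fm1 [hFm1 _ sFm1F]; split=> //; exact: (adj_simR hFm1 hFR sFm1F).
Qed.
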